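(* Let $\hat P$ be a partial $r$-differential poset of rank $n$, and let $P$ be the $r$-differential poset obtained from $\hat P$ by iterating Wagner's construction. Write $p_m$ for the rank sizes (which agree for $\hat P$ and $P$ in ranks $\le n$). (i) If $\Delta p_m\ge \Delta p_{m-j-\delta_{r,1}}$ holds for all $1\le m\le n$ and $1\le j\le m$, then $\Delta p_m\ge \Delta p_{m-j-\delta_{r,1}}$ holds in $P$ for all $m\ge1$ and $1\le j\le m$. (ii) If the cokernel of the up map $U_j:\mathbb{Z}^{p_j}\to\mathbb{Z}^{p_{j+1}}$ of $\hat P$ is free abelian for all $0\le j\le n-1$, then the cokernel of $U_m$ in $P$ is free abelian for all $m\ge 0$.
   Context: For a graded poset $Q$ with rank sets $Q_m$, the up map $U_m:\mathbb{Z}^{Q_m}\to\mathbb{Z}^{Q_{m+1}}$ sends each basis element to the sum of the elements covering it, and the down map $D_m:\mathbb{Z}^{Q_m}\to\mathbb{Z}^{Q_{m-1}}$ sends it to the sum of the elements it covers; $DU_m=D_{m+1}U_m$, $UD_m=U_{m-1}D_m$. A partial $r$-differential poset of rank $n$ is a finite graded poset of rank $n$ with a minimum element such that $DU_i-UD_i=rI$ for $i=0,1,\dots,n-1$. Wagner's construction: given such $Q$ of rank $n$, form $Q^+$ of rank $n+1$ by adding, for each $v\in Q_{n-1}$, a new element $v^*$ of rank $n+1$ covering exactly those $x\in Q_n$ that cover $v$, and then adjoining above each $x\in Q_n$ exactly $r$ new elements covering only $x$. Iterating $Q\mapsto Q^+$ indefinitely produces an $r$-differential poset (a graded poset with minimum,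 finite intervals and ranks, in which an element covering $m$ elements is covered by $m+r$, and two distinct elements covering exactly $m$ common elements are covered by exactly $m$ common elements). Here $p_m$ is the number of rank-$m$ elements, $p_k=0$ for $k<0$, $\Delta p_m=p_m-p_{m-1}$, $\delta_{r,1}$ is the Kronecker delta. *)

(* Defs.v *)
From HB Require Import structures.
From mathcomp Require Import all_boot all_order all_algebra.
Set Implicit Arguments. Unset Strict Implicit. Unset Printing Implicit Defensive.
Import Order.TTheory GRing.Theory Num.Theory.
Local Open Scope ring_scope.

(* A finite graded poset is encoded by its Hasse diagram:
   the elements of rank m are the naturals i < hsize m, and
   hcov m i j (i < hsize m, j < hsize m.+1) says that the element j of
   rank m+1 covers the element i of rank m.  (In a graded poset every
   cover relation is between consecutive ranks and the order is the
   reflexive-transitive closure of the covers.) *)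
Record hasse := Hasse { hsize : nat -> nat ; hcov : nat -> nat -> nat -> bool }.

Definition graded_rank (n : nat) (Q : hasse) : Prop :=
  [/\ hsize Q 0 = 1%N,
      (0 < hsize Q n)%N,
      (forall m, (n < m)%N -> hsize Q m = 0%N) &
      (forall m i, (i < hsize Q m.+1)%N ->
         exists2 j, (j < hsize Q m)%N & hcov Q m j i)].

Definition upmx (Q : hasse) (m : nat) : 'M[int]_(hsize Q m.+1, hsize Q m) :=
  \matrix_(i < hsize Q m.+1, j < hsize Q m) (nat_of_bool (hcov Q m j i))%:Z.

Definition downmx (Q : hasse) (m : nat) : 'M[int]_(hsize Q m, hsize Q m.+1) :=
  (upmx Q m)^T.

Definition DUmx (Q : hasse) (m : nat) : 'M[int]_(hsize Q m) :=
  downmx Q m *m upmx Q m.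

(* UD_m = U_{m-1} D_m, and UD_0 = 0 since Q_{-1} is empty *)
Definition UDmx (Q : hasse) (m : nat) : 'M[int]_(hsize Q m) :=
  match m return 'M[int]_(hsize Q m) with
  | 0 => 0
  | k.+1 => upmx Q k *m downmx Q k
  end.

Definition partial_diff (r n : nat) (Q : hasse) : Prop :=
  graded_rank n Q /\
  forall i, (i < n)%N -> DUmx Q i - UDmx Q i = (r%:Z)%:M.

Definition prev_size (Q : hasse) (n : nat) : nat :=
  if n is k.+1 then hsize Q k else 0%N.

Definition wagner (r n : nat) (Q : hasse) : hasse :=
  Hasse
    (fun m => if (m <= n)%N then hsize Q m
              else if m == n.+1 then (prev_size Q n + r * hsize Q n)%N else 0%N)
    (fun m i j =>
       if (m < n)%N then hcov Q m i j
       else if m == n then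
         (* rank-(n+1) elements: first v* for v in Q_{n-1},
            then r new elements above each x in Q_n (x*r + t, t < r) *)
         (if (j < prev_size Q n)%N then hcov Q n.-1 j i
          else ((j - prev_size Q n) %/ r == i)%N)
       else false).

Fixpoint wagner_iter (r n : nat) (Q : hasse) (k : nat) : hasse :=
  if k is k'.+1 then wagner r (n + k') (wagner_iter r n Q k') else Q.

(* The r-differential poset obtained by iterating indefinitely: ranks <= m
   of the limit are already fixed in the m-th iterate, and covers between
   ranks m and m+1 in the (m+1)-th iterate. *)
Definition wagner_limit (r n : nat) (Q : hasse) : hasse :=
  Hasse (fun m => hsize (wagner_iter r n Q m) m)
        (fun m => hcov (wagner_iter r n Q m.+1) m).

Definition psize (Q : hasse) (k : int) : int :=
  if k is Posz m then (hsize Q m)%:Z else 0.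

Definition dp (Q : hasse) (k : int) : int := psize Q k - psize Q (k - 1).

Definition kdelta (r : nat) : int := if r == 1%N then 1 else 0.

(* The cokernel of A : Z^a -> Z^b is free abelian: it is isomorphic to Z^k
   for some k, i.e. there is a surjective Z-linear map phi : Z^b -> Z^k whose
   kernel is exactly the image of A. *)
Definition coker_free (a b : nat) (A : 'M[int]_(b, a)) : Prop :=
  exists k (phi : 'M[int]_(k, b)),
    (forall y : 'cV[int]_k, exists x : 'cV[int]_b, phi *m x = y) /\
    (forall x : 'cV[int]_b, phi *m x = 0 <-> exists z : 'cV[int]_a, x = A *m z).

(* Main.v *)
Require Import Defs.
From HB Require Import structures.
From mathcomp Require Import all_boot all_order all_algebra zify.
Import Order.TTheory GRing.Theory Num.Theory.
Local Open Scope ring_scope.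

Lemma coker_sigma b a (M : 'M[int]_(b,a)) (s : 'I_a -> 'I_b) :
  (forall j l, M (s j) l = (j == l)%:R) -> coker_free M.
Proof.
move=> HM.
pose S : 'M[int]_(a,b) := \matrix_(j, i) (i == s j)%:R.
have Ssel : forall (y : 'cV[int]_b) j, (S *m y) j 0 = y (s j) 0.
  move=> y j; rewrite mxE (bigD1 (s j)) //= mxE eqxx mul1r big1 ?addr0 //.
  by move=> i /negbTE Hi; rewrite mxE Hi mul0r.
have SM : S *m M = 1%:M.
  apply/matrixP=> j l; rewrite mxE (bigD1 (s j)) //= mxE eqxx mul1r big1 ?addr0.
    by rewrite HM mxE.
  by move=> i /negbTE Hi; rewrite mxE Hi mul0r.
pose Pm : 'M[int]_b := 1%:M - M *m S.
have PM : Pm *m M = 0 by rewrite mulmxBl mul1mx -mulmxA SM mulmx1 subrr.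
have SP : S *m Pm = 0 by rewrite mulmxBr mulmx1 mulmxA SM mul1mx subrr.
pose C : {set 'I_b} := [set i | i \notin codom s].
exists #|C|, (\matrix_(c, i) Pm (enum_val (A:=C) c) i).
have phiE : forall (x : 'cV[int]_b) c,
    ((\matrix_(c, i) Pm (enum_val (A:=C) c) i) *m x) c 0 = (Pm *m x) (enum_val (A:=C) c) 0.
  by move=> x c; rewrite !mxE; apply: eq_bigr => i _; rewrite ?mxE.
split.
  move=> y.
  exists (\col_i \sum_(c < #|C|) (i == enum_val (A:=C) c)%:R * y c 0).
  apply/matrixP=> c k; rewrite (ord1 k) phiE.
  set x := \col_i _.
  have Sx : S *m x = 0.
    apply/matrixP=> j k'; rewrite (ord1 k') Ssel mxE [RHS]mxE big1 //.
    move=> c' _; have := enum_valP c'; rewrite inE => Hc.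
    have -> : (s j == enum_val c') = false.
      by apply/negbTE; apply: contraNneq Hc => <-; apply: codom_f.
    by rewrite mul0r.
  rewrite /Pm mulmxBl mul1mx -mulmxA Sx mulmx0 subr0 mxE.
  rewrite (bigD1 c) //= eqxx mul1r big1 ?addr0 //.
  move=> c' Hc'; rewrite (inj_eq enum_val_inj) eq_sym (negbTE Hc') mul0r //.
move=> x; split.
  move=> Hx; exists (S *m x).
  have Px : Pm *m x = 0.
    apply/matrixP=> i k; rewrite (ord1 k) [RHS]mxE.
    case: (boolP (i \in C)) => Hi.
      rewrite -(enum_rankK_in Hi Hi) -phiE Hx mxE //.
    move: Hi; rewrite inE negbK => /codomP [j ->].
    by rewrite -Ssel mulmxA SP mul0mx mxE.
  by move: Px; rewrite /Pm mulmxBl mul1mx mulmxA => /eqP; rewrite subr_eq0 => /eqP.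
move=> [z ->]; apply/matrixP=> c k; rewrite (ord1 k) phiE mulmxA PM mul0mx !mxE //.
Qed.

Definition CF a b (f : nat -> nat -> bool) :=
  coker_free (\matrix_(i < b, j < a) (nat_of_bool (f j i))%:Z).

Lemma CF_ext a b f f' : (forall j i, (j < a)%N -> (i < b)%N -> f j i = f' j i) ->
  CF a b f -> CF a b f'.
Proof.
move=> H; rewrite /CF.
have -> : (\matrix_(i < b, j < a) (nat_of_bool (f' j i))%:Z) =
          (\matrix_(i < b, j < a) (nat_of_bool (f j i))%:Z) :> 'M[int]_(b,a).
  by apply/matrixP=> i j; rewrite !mxE H.
by [].
Qed.

Lemma iter_size_mono r n Q k1 k2 j : (k1 <= k2)%N -> (j <= n + k1)%N ->
  hsize (wagner_iter r n Q k2) j = hsize (wagner_iter r n Q k1) j.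
Proof.
elim: k2 => [|k2 IH] Hk Hj; first by move: Hk; rewrite leqn0 => /eqP ->.
case: (ltngtP k1 k2.+1) Hk => // [Hlt _|-> _]; last by [].
rewrite /= ifT; first by apply: IH.
lia.
Qed.

Lemma iter_cov_mono r n Q k1 k2 j x y : (k1 <= k2)%N -> (j < n + k1)%N ->
  hcov (wagner_iter r n Q k2) j x y = hcov (wagner_iter r n Q k1) j x y.
Proof.
elim: k2 => [|k2 IH] Hk Hj; first by move: Hk; rewrite leqn0 => /eqP ->.
case: (ltngtP k1 k2.+1) Hk => // [Hlt _|-> _]; last by [].
rewrite /= ifT; first by apply: IH.
lia.
Qed.

Lemma iter_size_P r n Q k j : (j <= n + k)%N ->
  hsize (wagner_iter r n Q k) j = hsize (wagner_limit r n Q) j.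
Proof.
move=> Hj; rewrite /=.
case: (leqP j k) => Hjk.
  by rewrite (@iter_size_mono r n Q j k j Hjk) //; lia.
by rewrite (@iter_size_mono r n Q k j j (ltnW Hjk) Hj).
Qed.

Lemma P_low r n Q m : (m <= n)%N -> hsize (wagner_limit r n Q) m = hsize Q m.
Proof. by move=> Hm; rewrite -(@iter_size_P r n Q 0) ?addn0. Qed.

Lemma P_rec r n Q m : (n <= m)%N ->
  hsize (wagner_limit r n Q) m.+1 =
  ((if m is m'.+1 then hsize (wagner_limit r n Q) m' else 0) +
   r * hsize (wagner_limit r n Q) m)%N.
Proof.
move=> Hm; have [k Em] : exists k, m = (n + k)%N by exists (m - n)%N; lia.
rewrite -(@iter_size_P r n Q k.+1); last by lia.
rewrite /= ifF; last by lia.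
rewrite -Em eqxx (@iter_size_P r n Q k); last by lia.
congr (_ + _)%N.
case: m Em {Hm} => [|m'] Em //=.
by rewrite (@iter_size_P r n Q k m') //; lia.
Qed.

Lemma P_cov_low r n Q m x y : (m < n)%N -> hcov (wagner_limit r n Q) m x y = hcov Q m x y.
Proof.
move=> Hm; change (hcov (wagner_iter r n Q m.+1) m x y = hcov Q m x y).
by rewrite (@iter_cov_mono r n Q 0) // addn0.
Qed.

Lemma CF_wagner a ps r (g : nat -> nat -> bool) : (0 < r)%N ->
  CF a (ps + r * a) (fun j i => if (i < ps)%N then g j i else ((i - ps) %/ r == j)%N).
Proof.
move=> r0; rewrite /CF.
have Hs : forall j : 'I_a, (ps + r * j < ps + r * a)%N.
  move=> j; have := ltn_ord j; rewrite ltn_add2l ltn_pmul2l //.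
apply: (@coker_sigma _ _ _ (fun j => Ordinal (Hs j))) => j l.
rewrite mxE /= ifF; last by lia.
rewrite addKn mulKn //.
have -> : (nat_of_ord j == nat_of_ord l) = (j == l) by [].
by case: (j == l).
Qed.
Lemma psizeS Q t : psize Q (t.+1%:Z - 1) = (hsize Q t)%:Z.
Proof. by have -> : t.+1%:Z - 1 = t%:Z by rewrite -addn1 PoszD addrK. Qed.

Lemma psize_neg Q x : x < 0 -> psize Q x = 0.
Proof. by case: x. Qed.

Lemma psize_ge0 Q x : 0 <= psize Q x.
Proof. by case: x. Qed.

Lemma dp_neg Q x : x < 0 -> dp Q x = 0.
Proof.
move=> Hx; rewrite /dp !psize_neg ?subrr //.
by apply: lt_trans Hx; rewrite gtrDl.
Qed.

Lemma dpS Q t : dp Q t.+1%:Z = (hsize Q t.+1)%:Z - (hsize Q t)%:Z.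
Proof. by rewrite /dp psizeS. Qed.

Lemma dp0 Q : dp Q 0 = (hsize Q 0)%:Z.
Proof. by rewrite /dp [psize Q (0 - 1)]psize_neg ?subr0. Qed.

Lemma dp_le Q t : dp Q t%:Z <= (hsize Q t)%:Z.
Proof. by rewrite /dp gerBl psize_ge0. Qed.

Lemma psize_low r n Q x : x <= n%:Z -> psize (wagner_limit r n Q) x = psize Q x.
Proof.
case: x => [t|t] H; last by [].
change ((hsize (wagner_limit r n Q) t)%:Z = (hsize Q t)%:Z).
by rewrite P_low // -lez_nat.
Qed.

Lemma dp_low r n Q x : x <= n%:Z -> dp (wagner_limit r n Q) x = dp Q x.
Proof.
move=> H; rewrite /dp !psize_low //.
by apply: le_trans H; rewrite gerBl.
Qed.

Lemma P_recZ r n Q m : (n <= m)%N ->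
  (hsize (wagner_limit r n Q) m.+1)%:Z =
  (if m is m'.+1 then (hsize (wagner_limit r n Q) m')%:Z else 0) +
   r%:Z * (hsize (wagner_limit r n Q) m)%:Z.
Proof. by move=> H; rewrite P_rec // PoszD PoszM; case: m {H}. Qed.

Lemma P_cov_high r n Q m x y : (n <= m)%N ->
  hcov (wagner_limit r n Q) m x y =
  (let ps := (if m is m'.+1 then hsize (wagner_limit r n Q) m' else 0)%N in
   if (y < ps)%N then hcov (wagner_iter r n Q (m - n)) m.-1 y x
   else ((y - ps) %/ r == x)%N).
Proof.
move=> Hm; have [k Em] : exists k, m = (n + k)%N by exists (m - n)%N; lia.
have -> : hcov (wagner_limit r n Q) m x y = hcov (wagner_iter r n Q m.+1) m x y by [].
rewrite (@iter_cov_mono r n Q k.+1 m.+1 m x y); [|lia|lia].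
have -> : (m - n)%N = k by lia.
rewrite /= ifF; last by lia.
rewrite -Em eqxx.
have -> : prev_size (wagner_iter r n Q k) m =
          (if m is m'.+1 then hsize (wagner_limit r n Q) m' else 0)%N.
  case: m Em {Hm} => [|m'] Em //=.
  by rewrite (@iter_size_P r n Q k m') //; lia.
by [].
Qed.

Theorem proposition4p1 (r n : nat) (Phat : hasse) :
  (0 < r)%N -> partial_diff r n Phat ->
  let P := wagner_limit r n Phat in
  ((forall m j : nat, (1 <= m <= n)%N -> (1 <= j <= m)%N ->
      dp Phat (m%:Z - j%:Z - kdelta r) <= dp Phat m%:Z) ->
   (forall m j : nat, (1 <= m)%N -> (1 <= j <= m)%N ->
      dp P (m%:Z - j%:Z - kdelta r) <= dp P m%:Z))
  /\
  ((forall j : nat, (j < n)%N -> coker_free (upmx Phat j)) ->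
   (forall m : nat, coker_free (upmx P m))).
Proof.
move=> r0 _ P; split; last first.
  move=> H m; change (CF (hsize P m) (hsize P m.+1) (hcov P m)).
  case: (ltnP m n) => Hm.
    rewrite /P !P_low //; last exact: ltnW.
    apply: (@CF_ext _ _ (hcov Phat m)); last exact: (H m Hm).
    by move=> x y _ _; rewrite P_cov_low.
  rewrite /P P_rec //.
  apply: CF_ext; last first.
    exact: (@CF_wagner _ _ _ (fun x y => hcov (wagner_iter r n Phat (m - n)) m.-1 y x) r0).
  by move=> x y _ _; rewrite P_cov_high.
move=> H.
have H' : forall m j : nat, (1 <= m <= n)%N -> (1 <= j <= m)%N ->
      dp P (m%:Z - j%:Z - kdelta r) <= dp P m%:Z.
  move=> m j Hm Hj; rewrite /P !dp_low; first exact: H.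
  - by rewrite lez_nat; case/andP: Hm.
  - rewrite /kdelta; case: (r == 1%N); lia.
have Hrec : forall m, (n <= m)%N -> (hsize P m.+1)%:Z =
   (if m is m'.+1 then (hsize P m')%:Z else 0) + r%:Z * (hsize P m)%:Z.
  by move=> m Hm; rewrite /P P_recZ.
have qge0 : forall t, 0 <= (hsize P t)%:Z by [].
case: (eqVneq r 1%N) => Hr.
  have Hk : kdelta r = 1 by rewrite /kdelta Hr.
  have nonneg : forall t, 0 <= dp P t%:Z.
    case=> [|t]; first by rewrite dp0.
    case: (leqP t.+1 n) => Ht.
      have := H' t.+1 t.+1; rewrite Ht leqnn /= Hk subrr sub0r dp_neg //.
      by apply.
    rewrite dpS Hrec; last by lia.
    rewrite Hr mul1r addrK; case: t {Ht} => //.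
  have mono : forall t u, (t <= u)%N -> (hsize P t)%:Z <= (hsize P u)%:Z.
    move=> t u /subnK <-; elim: (u - t)%N => [|d IH] //.
    apply: le_trans IH _; have := nonneg (d + t).+1.
    by rewrite dpS subr_ge0 addSn.
  move=> m j Hm Hj; rewrite Hk.
  case: (leqP m n) => Hmn; first by rewrite -Hk; apply: H' => //; rewrite Hm Hmn.
  case/andP: Hj => Hj1 Hjm'.
  case: (ltngtP j m) => [Hjm|Hgt|Heq]; [|lia|]; last first.
    by rewrite Heq subrr sub0r dp_neg.
  have [m2 Em] : exists m2, m = m2.+2 by exists (m - 2)%N; lia.
  have -> : m%:Z - j%:Z - 1 = (m - j.+1)%N%:Z by rewrite -subzn ?PoszD; lia.
  rewrite Em dpS Hrec; last by lia.
  rewrite Hr mul1r addrK.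
  apply: le_trans (dp_le _ _) _; apply: mono; lia.
have Hk : kdelta r = 0 by rewrite /kdelta (negbTE Hr).
have r2 : (2 <= r)%N by lia.
have claim : forall m t, (t < m)%N -> dp P t%:Z <= dp P m%:Z.
  elim=> [//|m IH] t Ht.
  case: (leqP m.+1 n) => Hmn.
    have := H' m.+1 (m.+1 - t)%N; rewrite Hmn /= Hk subr0.
    have -> : m.+1%:Z - (m.+1 - t)%N%:Z = t%:Z by rewrite -subzn ?subKn //; lia.
    apply; lia.
  have step : dp P m%:Z <= dp P m.+1%:Z.
    rewrite dpS Hrec; last by lia.
    rewrite /dp.
    have h2 : 0 <= (if m is m'.+1 then (hsize P m')%:Z else 0) by case: m {IH Ht Hmn} => [|m'].
    have h1 := psize_ge0 P (m%:Z - 1).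
    have h3 := qge0 m.
    have h4 : 2 <= r%:Z by rewrite lez_nat.
    change (psize P m%:Z) with ((hsize P m)%:Z).
    have h5 : 2 * (hsize P m)%:Z <= r%:Z * (hsize P m)%:Z by apply: ler_wpM2r.
    move: h1 h2 h5 h3; case: m {IH Ht Hmn} => [|m'] h1 h2 h5 h3; lia.
  case: (ltngtP t m) => [Htm|Hgt|Heq]; [|lia|by rewrite Heq].
  by apply: le_trans (IH t Htm) step.
move=> m j Hm Hj; rewrite Hk subr0.
have -> : m%:Z - j%:Z = (m - j)%N%:Z by rewrite -subzn //; lia.
apply: claim; lia.
Qed.
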